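(* Let $A$ be a finite set with $|A|=n$ and let $f:A\to A$ be a bijection. Then there exists a binary operation $*$ on $A$ such that $(A,* )$ is a cyclic group and $f$ is an automorphism of $(A,* )$ if and only if either $f$ is the identity map, or there is an index $i$ with $2\le i\le \phi(n)$ such that, writing $\ell_i=\mathrm{ord}_n(k_i)$ and letting $\ell_i>\lambda_1>\cdots>\lambda_t>1$ be the complete list of positive divisors of $\ell_i$ that are greater than $1$, the bijection $f$ has exactly $[U_n:\langle k_i\rangle]+L_{i,\ell_i}$ cycles of length $\ell_i$, exactly $L_{i,\lambda_j}$ cycles of length $\lambda_j$ for each $j=1,\dots,t$, exactly $L_{i,1}+1$ cycles of length $1$ (fixed points), and no other cycles.
   Context: For a bijection $f$ of a finite set, a cycle is a sequence $a_1,\dots,a_m$ of distinct elements with $f(a_j)=a_{j+1}$ for $j<m$ and $f(a_m)=a_1$; its length is $m$; every element lies in exactly one cycle. $\phi$ is Euler's totient function. In the ring $\mathbb{Z}_n=\{0,1,\dots,n-1\}$, let $U_n=\{k\in\mathbb{Z}_n:\gcd(k,n)=1\}$ be the unit group, enumerated as $U_n=\{k_1,k_2,\dots,k_{\phi(n)}\}$ with $k_1=1$. Let $T_n=\mathbb{Z}_n\setminus(U_n\cup\{0\})$, and for $z\in T_n$ put $z'=n/\gcd(z,n)$. For integers $m\ge1$ and $k$ coprime to $m$, $\mathrm{ord}_m(k)$ denotes the least $x\in\mathbb{N}$ with $k^x\equiv1\pmod m$. $\langle k_i\rangle$ is the cyclic subgroup of $U_n$ generated by $k_i$ and $[U_n:\langle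 k_i\rangle]$ its index. For a positive divisor $\lambda$ of $\ell_i$, define $L_{i,\lambda}=\frac{1}{\lambda}\left|\{z\in T_n:\mathrm{ord}_{z'}(k_i)=\lambda\}\right|$. *)

(* Defs.v *)
From HB Require Import structures.
From mathcomp Require Import all_boot all_order all_algebra all_fingroup.
Set Implicit Arguments.
Unset Strict Implicit.
Unset Printing Implicit Defensive.
Import GRing.Theory.

Definition gpow (A : Type) (op : A -> A -> A) (e : A) (inv : A -> A)
    (g : A) (z : int) : A :=
  match z with
  | Posz m => iter m (op g) e
  | Negz m => iter m.+1 (op (inv g)) e
  end.

Definition cyclic_group_op (A : Type) (op : A -> A -> A) : Prop :=
  exists (e : A) (inv : A -> A),
    [/\ (forall x y z, op x (op y z) = op (op x y) z),
        (forall x, op e x = x /\ op x e = x),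
        (forall x, op (inv x) x = e /\ op x (inv x) = e) &
        exists g : A, forall x : A, exists z : int, x = gpow op e inv g z].

Definition ncyc (A : finType) (f : {perm A}) (m : nat) : nat :=
  #|[set C in porbits f | #|C| == m]|.

(* ord_m(k): least x >= 1 with k^x = 1 (mod m); (the search range 1..m suffices
   when m >= 1 and k is coprime to m, since ord_m(k) <= phi(m) <= m) *)
Definition ordm (m k : nat) : nat :=
  (find (fun x => k ^ x.+1 == 1 %[mod m]) (iota 0 m)).+1.

Definition Tset (n : nat) : {set 'I_n} :=
  [set z : 'I_n | (val z != 0) && ~~ coprime z n].

Definition Lc (n k lam : nat) : rat :=
  (#|[set z in Tset n | ordm (n %/ gcdn z n) k == lam]|%:R / lam%:R)%R.

(* k as an element of the unit group U_n of Z_n (used for n >= 2, k coprime to n) *)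
Definition kunit (n k : nat) : {unit 'Z_n} := insubd (1%g : {unit 'Z_n}) (k%:R : 'Z_n)%R.

Definition unit_index (n k : nat) : nat :=
  #|[set: {unit 'Z_n}] : <[kunit n k]>|%g.

(* Main.v *)
Require Import Defs.
From mathcomp Require Import all_boot all_order all_algebra all_fingroup all_solvable.
Set Implicit Arguments. Unset Strict Implicit. Unset Printing Implicit Defensive.

Module M1.

Section Orb.
Variable T : finType.
Implicit Types (s : {perm T}) (x : T).

Lemma porbit_gt0 s x : 0 < #|porbit s x|.
Proof. by rewrite lt0n card_porbit_neq0. Qed.

Lemma iter_perm_mod s x j : iter j s x = iter (j %% #|porbit s x|) s x.
Proof.
set d := #|porbit s x|.
rewrite {1}(divn_eq j d) addnC iterD; congr (iter _ _ _).
elim: (j %/ d) => [|q IH] //.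
by rewrite mulSn iterD IH iter_porbit.
Qed.

Lemma iter_perm_inj s x r r' : r < #|porbit s x| -> r' < #|porbit s x| ->
  (iter r s x == iter r' s x) = (r == r').
Proof.
move=> hr hr'.
by rewrite -(nth_traject s hr x) -(nth_traject s hr' x) nth_uniq ?size_traject // uniq_traject_porbit.
Qed.

Lemma iter_perm_eqmod s x j j' :
  (iter j s x == iter j' s x) = (j == j' %[mod #|porbit s x|]).
Proof.
by rewrite iter_perm_mod [iter j' _ _]iter_perm_mod iter_perm_inj ?ltn_pmod ?porbit_gt0.
Qed.

Lemma iter_perm_eq s x j : (iter j s x == x) = (#|porbit s x| %| j).
Proof.
have := iter_perm_eqmod s x j 0; rewrite /= => ->.
by rewrite mod0n.
Qed.

Lemma porbit_iter s x j : porbit s (iter j s x) = porbit s x.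
Proof. by rewrite -permX porbit_perm. Qed.

Lemma card_sum (C : {set T}) : #|C| = \sum_(x : T) (x \in C : nat).
Proof. by rewrite -sum1_card big_mkcond; apply: eq_bigr => x _; case: (x \in C). Qed.

Lemma ncyc_card s m :
  ncyc s m * m = #|[set x | #|porbit s x| == m]|.
Proof.
rewrite /ncyc.
have -> : #|[set C in porbits s | #|C| == m]| * m = \sum_(C in [set C in porbits s | #|C| == m]) #|C|.
  rewrite (eq_bigr (fun _ => m)) ?sum_nat_const // => C.
  by rewrite inE => /andP[_ /eqP].
transitivity (\sum_(C in [set C in porbits s | #|C| == m]) \sum_(x : T) (x \in C : nat)).
  by apply: eq_big => // C _; exact: card_sum.
rewrite exchange_big /=.
transitivity (\sum_(x : T) (x \in [set x | #|porbit s x| == m] : nat)); last exact/esym/card_sum.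
apply: eq_bigr => x _.
rewrite inE.
case hx: (#|porbit s x| == m).
  rewrite (bigD1 (porbit s x)) /=; last by rewrite inE hx andbT imset_f.
  rewrite porbit_id big1 // => C /andP[]; rewrite inE => /andP[/imsetP[y _ ->] _].
  by rewrite eq_sym eq_porbit_mem => /negbTE ->.
rewrite big1 // => C; rewrite inE => /andP[/imsetP[y _ ->] hy].
case hxy: (x \in porbit s y) => //.
move: hxy; rewrite -eq_porbit_mem => /eqP e.
by rewrite -e hx in hy.
Qed.

End Orb.

End M1.
Import M1.

Module M2.

Section Conj.
Variables (A B : finType) (f : {perm A}) (g : {perm B}).

Lemma iter_conj (h : B -> A) (hc : forall y, f (h y) = h (g y)) j y :
  iter j f (h y) = h (iter j g y).
Proof. by elim: j => //= j ->; rewrite hc. Qed.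

Lemma porbit_card_conj (h : B -> A) (hI : injective h)
  (hc : forall y, f (h y) = h (g y)) y : #|porbit f (h y)| = #|porbit g y|.
Proof.
have e1 : iter #|porbit g y| g y = y by apply/eqP; rewrite iter_perm_eq.
have e2 : iter #|porbit f (h y)| f (h y) = h y by apply/eqP; rewrite iter_perm_eq.
apply/eqP; rewrite eqn_dvd; apply/andP; split.
  by rewrite -iter_perm_eq (iter_conj hc) e1.
rewrite -iter_perm_eq; apply/eqP/hI; by rewrite -(iter_conj hc).
Qed.

Lemma ncyc0 (T : finType) (s : {perm T}) : ncyc s 0 = 0.
Proof.
apply/eqP; rewrite cards_eq0; apply/eqP/setP => C; rewrite !inE.
apply/negbTE; apply/negP => /andP[/imsetP[x _ ->]].
by rewrite (negbTE (card_porbit_neq0 _ _)).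
Qed.

Lemma ncyc_conj (h : B -> A) (hb : bijective h)
  (hc : forall y, f (h y) = h (g y)) m : ncyc f m = ncyc g m.
Proof.
case: m => [|m]; first by rewrite !ncyc0.
apply/eqP; rewrite -(eqn_pmul2r (ltn0Sn m)) !ncyc_card; apply/eqP.
have hI := bij_inj hb.
have -> : [set x | #|porbit f x| == m.+1] = h @: [set y | #|porbit g y| == m.+1].
  apply/setP => x; rewrite inE; apply/idP/imsetP.
    case: hb => hi h1 h2 hx; exists (hi x); last by rewrite h2.
    by rewrite inE -(porbit_card_conj hI hc) h2.
  by case=> y; rewrite inE => hy ->; rewrite porbit_card_conj.
by rewrite card_imset.
Qed.

End Conj.

End M2.
Import M2.

Module M3.

Section Build.
Variables (A B : finType) (f : {perm A}) (g : {perm B}) (a0 : A).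
Hypothesis hcyc : forall m, ncyc f m = ncyc g m.
Hypothesis hcard : #|A| <= #|B|.

Definition Sf m := [set C in porbits f | #|C| == m].
Definition Sg m := [set C in porbits g | #|C| == m].

Definition beta (C : {set B}) : {set A} :=
  nth set0 (enum (Sf #|C|)) (index C (enum (Sg #|C|))).

Lemma size_S m : size (enum (Sf m)) = size (enum (Sg m)).
Proof. by rewrite -!cardE; exact: hcyc. Qed.

Lemma idx_lt C : C \in porbits g -> index C (enum (Sg #|C|)) < size (enum (Sf #|C|)).
Proof. by move=> hC; rewrite size_S index_mem mem_enum inE hC eqxx. Qed.

Lemma beta_in C : C \in porbits g -> beta C \in Sf #|C|.
Proof.
move=> hC.
have hC' : C \in Sg #|C| by rewrite inE hC eqxx.
by rewrite /beta -mem_enum; apply: mem_nth; apply: idx_lt.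
Qed.

Lemma beta_porbits C : C \in porbits g -> beta C \in porbits f.
Proof. by move/beta_in; rewrite inE => /andP[]. Qed.

Lemma beta_card C : C \in porbits g -> #|beta C| = #|C|.
Proof. by move/beta_in; rewrite inE => /andP[_ /eqP]. Qed.

Lemma beta_inj C C' : C \in porbits g -> C' \in porbits g -> beta C = beta C' -> C = C'.
Proof.
move=> hC hC' e.
have ec : #|C| = #|C'| by rewrite -beta_card // e beta_card.
have hC1 : C \in Sg #|C| by rewrite inE hC eqxx.
have hC1' : C' \in Sg #|C| by rewrite inE hC' ec eqxx.
move: e; rewrite /beta -ec => /eqP.
rewrite nth_uniq ?enum_uniq ?idx_lt //; last by rewrite size_S index_mem mem_enum.
move=> /eqP ei.
have := nth_index set0 (s := enum (Sg #|C|)) (x := C); rewrite mem_enum hC1 => /(_ isT) <-.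
by rewrite ei nth_index // mem_enum.
Qed.

Lemma porbit_in y : porbit g y \in porbits g.
Proof. by apply: imset_f. Qed.

Definition rep (y : B) : B := odflt y [pick z in porbit g y].

Lemma rep_in y : rep y \in porbit g y.
Proof.
rewrite /rep; case: pickP => [z hz //|none].
by have := none y; rewrite porbit_id.
Qed.

Lemma porbit_rep y : porbit g (rep y) = porbit g y.
Proof. by apply/eqP; rewrite eq_porbit_mem rep_in. Qed.

Lemma rep_eq y y' : porbit g y = porbit g y' -> rep y = rep y'.
Proof.
rewrite /rep => ->; case: pickP => [z _ //|none].
by have := none y'; rewrite porbit_id.
Qed.

Definition rD (y : B) : A := odflt a0 [pick z in beta (porbit g y)].

Lemma rD_in y : rD y \in beta (porbit g y).
Proof.
have hb := beta_card (porbit_in y).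
rewrite /rD; case: pickP => [z hz //|none].
have : 0 < #|beta (porbit g y)| by rewrite hb porbit_gt0.
by rewrite card_gt0 => /set0Pn[z hz]; have := none z; rewrite hz.
Qed.

Lemma porbit_rD y : porbit f (rD y) = beta (porbit g y).
Proof.
have /imsetP[w _ ew] := beta_porbits (porbit_in y).
have := rD_in y; rewrite ew => hw.
by apply/eqP; rewrite eq_porbit_mem.
Qed.

Lemma card_rD y : #|porbit f (rD y)| = #|porbit g (rep y)|.
Proof. by rewrite porbit_rD porbit_rep beta_card // imset_f. Qed.

Definition hh (y : B) : A :=
  iter (index y (traject g (rep y) #|porbit g y|)) f (rD y).

Lemma hh_char y j : iter j g (rep y) = y -> hh y = iter j f (rD y).
Proof.
move=> hj.
have yin : y \in traject g (rep y) #|porbit g y|.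
  by rewrite -porbit_rep -porbit_traject porbit_sym rep_in.
have hi : iter (index y (traject g (rep y) #|porbit g y|)) g (rep y) = y.
  have := nth_index (rep y) yin; rewrite nth_traject //.
  by move: yin; rewrite -index_mem size_traject.
rewrite /hh; apply/eqP; rewrite iter_perm_eqmod card_rD -iter_perm_eqmod.
by rewrite hi hj.
Qed.

Lemma hh_comm y : f (hh y) = hh (g y).
Proof.
have yin : y \in porbit g (rep y) by rewrite porbit_sym rep_in.
case/porbitP: yin => j; rewrite permX => hj.
have e : porbit g (g y) = porbit g y by rewrite -[g y]/(iter 1 g y) porbit_iter.
rewrite (hh_char (esym hj)); symmetry.
have erD : rD (g y) = rD y by rewrite /rD e.
rewrite (hh_char (y := g y) (j := j.+1)) ?erD //.
by rewrite /= (rep_eq e) -hj.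
Qed.

Lemma hh_in y : hh y \in beta (porbit g y).
Proof. by rewrite -porbit_rD /hh -permX mem_porbit. Qed.

Lemma hh_inj : injective hh.
Proof.
move=> y y' e.
have eb : beta (porbit g y) = beta (porbit g y').
  have h1 := hh_in y; rewrite e in h1.
  have h2 := hh_in y'.
  rewrite -!porbit_rD.
  have a1 : porbit f (hh y') = porbit f (rD y) by apply/eqP; rewrite eq_porbit_mem porbit_rD.
  have a2 : porbit f (hh y') = porbit f (rD y') by apply/eqP; rewrite eq_porbit_mem porbit_rD.
  by rewrite -a1 a2.
have eC := beta_inj (porbit_in y) (porbit_in y') eb.
have er := rep_eq eC.
have erD : rD y = rD y' by rewrite /rD eC.
have yin : y \in porbit g (rep y) by rewrite porbit_sym rep_in.
have yin' : y' \in porbit g (rep y) by rewrite er porbit_sym rep_in.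
case/porbitP: yin => j; rewrite permX => hj.
case/porbitP: yin' => j'; rewrite permX => hj'.
move: e; rewrite (hh_char (esym hj)) (hh_char (y := y') (j := j')) -?er -?hj' //.
rewrite -erD => /eqP; rewrite iter_perm_eqmod card_rD -iter_perm_eqmod.
by rewrite -hj -hj' => /eqP.
Qed.

Lemma conj_exists : exists h : B -> A, bijective h /\ forall y, f (h y) = h (g y).
Proof.
exists hh; split; last exact: hh_comm.
by apply: inj_card_bij => //; exact: hh_inj.
Qed.

End Build.

End M3.
Import M3.

Module M4.

Lemma totient_leq n : totient n <= n.
Proof.
rewrite totient_count_coprime.
apply: leq_trans (_ : \sum_(0 <= d < n) 1 <= n).
  by apply: leq_sum => i _; apply: leq_b1.
by rewrite sum_nat_const_nat subn0 muln1.
Qed.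

Lemma ordm_gt0 d k : 0 < ordm d k.
Proof. by []. Qed.

Lemma ordm1 k : ordm 1 k = 1.
Proof. by rewrite /ordm /= !modn1. Qed.

Lemma ordm_dvd d k i : 0 < d -> coprime k d ->
  (k ^ i == 1 %[mod d]) = (ordm d k %| i).
Proof.
move=> d0 cop.
set P := (fun x => k ^ x.+1 == 1 %[mod d]).
have hasP : has P (iota 0 d).
  apply/hasP; exists (totient d).-1.
    rewrite mem_iota add0n /=.
    by apply: leq_trans (totient_leq d); rewrite prednK // totient_gt0.
  by rewrite /P prednK ?totient_gt0 //; apply/eqP; apply: Euler_exp_totient.
have fl : find P (iota 0 d) < d by move: hasP; rewrite has_find size_iota.
have ho : k ^ ordm d k == 1 %[mod d].
  have := nth_find 0 hasP; rewrite nth_iota //.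
have hmin : forall j, 0 < j < ordm d k -> (k ^ j == 1 %[mod d]) = false.
  move=> [|j] // /andP[_ hj].
  have := before_find 0 hj; rewrite nth_iota //.
  by apply: ltn_trans fl.
set o := ordm d k in ho hmin *.
have e : k ^ i = k ^ (i %% o) %[mod d].
  have -> : k ^ i = (k ^ o) ^ (i %/ o) * k ^ (i %% o).
    by rewrite -expnM -expnD mulnC -divn_eq.
  rewrite -modnMml -(modnXm (i %/ o) d (k ^ o)) (eqP ho).
  by rewrite modnXm exp1n modnMml mul1n.
rewrite /= e /dvdn.
case: (posnP (i %% o)) => [->|r0]; first by rewrite eqxx.
by rewrite -/(_ == _ %[mod d]) hmin ?r0 ?ltn_pmod //; move: r0; rewrite lt0n eq_sym => /negbTE ->.
Qed.

Lemma mul_mod_gcd n i a b : 0 < n -> b <= a ->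
  (a * i == b * i %[mod n]) = (a == b %[mod n %/ gcdn i n]).
Proof.
move=> n0 ba.
set g := gcdn i n.
have g0 : 0 < g by rewrite gcdn_gt0 n0 orbT.
have ei : i = i %/ g * g by rewrite divnK // dvdn_gcdl.
have en : n = n %/ g * g by rewrite divnK // dvdn_gcdr.
have cop : coprime (n %/ g) (i %/ g).
  by rewrite /coprime -(eqn_pmul2r g0) mul1n muln_gcdl -en -ei /g gcdnC.
rewrite (eqn_mod_dvd n); last by rewrite leq_mul2r ba orbT.
rewrite (eqn_mod_dvd (n %/ g)) // -mulnBl.
by rewrite {1}en {1}ei mulnA dvdn_pmul2r // Gauss_dvdl.
Qed.

End M4.
Import M4.

Module M5.
Import GRing.Theory.

Lemma order_kunit n k : 1 < n -> coprime k n -> #[kunit n k]%g = ordm n k.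
Proof.
move=> n1 cop.
have uk : (k%:R : 'Z_n)%R \is a GRing.unit by rewrite unitZpE // coprime_sym.
have vk : val (kunit n k) = (k%:R : 'Z_n)%R by rewrite /kunit insubdK.
have H : forall j, (#[kunit n k]%g %| j) = (ordm n k %| j).
  move=> j; rewrite order_dvdn -ordm_dvd ?(ltnW n1) //.
  rewrite -val_eqE /= FinRing.val_unitX vk -natrX.
  by rewrite -val_eqE /= val_Zp_nat // Zp_cast.
by apply/eqP; rewrite eqn_dvd H dvdnn -H dvdnn.
Qed.

Lemma index_kunit n k : 1 < n -> coprime k n -> unit_index n k * ordm n k = totient n.
Proof.
move=> n1 cop.
rewrite /unit_index -order_kunit // mulnC -[#[_]%g]/(#|<[kunit n k]>%g|).
rewrite Lagrange ?subsetT //.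
by have := card_units_Zp (ltnW n1); rewrite /units_Zp.
Qed.

End M5.
Import M5.

Module M6.
Import GRing.Theory Num.Theory.

Definition conds (n k : nat) (c : nat -> nat) : Prop :=
  let l := ordm n k in
  [/\ ((c l)%:R = (unit_index n k)%:R + Lc n k l :> rat)%R,
      (forall lam, 1 < lam < l -> lam %| l -> ((c lam)%:R = Lc n k lam :> rat)%R),
      ((c 1)%:R = Lc n k 1 + 1 :> rat)%R &
      (forall m, ~~ (m %| l) -> c m = 0)].

Lemma card_sumb (T : finType) (b : pred T) : #|[set x | b x]| = \sum_x (b x : nat).
Proof. by rewrite -sum1dep_card big_mkcond; apply: eq_bigr => x _; case: (b x). Qed.

Section Model.
Variables (n k : nat) (g : {perm 'I_n}).
Hypotheses (hk : 1 < k < n) (cop : coprime k n)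
  (hg : forall i, val (g i) = (k * i) %% n).

Let n1 : 1 < n. Proof. by case/andP: hk => h1 h2; apply: ltn_trans h1 h2. Qed.
Let n0 : 0 < n. Proof. exact: ltnW n1. Qed.
Let k0 : 0 < k. Proof. by case/andP: hk => h1 _; apply: ltnW. Qed.

Lemma iter_g j i : val (iter j g i) = (k ^ j * i) %% n.
Proof.
elim: j => [|j IH] /=; first by rewrite mul1n modn_small.
by rewrite hg IH modnMmr mulnA -expnS.
Qed.

Lemma sz_g i : #|porbit g i| = ordm (n %/ gcdn i n) k.
Proof.
set d := n %/ gcdn i n.
have d0 : 0 < d.
  by rewrite divn_gt0 ?gcdn_gt0 ?n0 ?orbT // dvdn_leq // dvdn_gcdr.
have cd : coprime k d.
  apply: coprime_dvdr cop.
  by apply/dvdnP; exists (gcdn i n); rewrite mulnC divnK // dvdn_gcdr.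
have H : forall j, (#|porbit g i| %| j) = (ordm d k %| j).
  move=> j; rewrite -iter_perm_eq -ordm_dvd // -(mul_mod_gcd _ n0) ?expn_gt0 ?k0 //.
  by rewrite -val_eqE /= iter_g mul1n (modn_small (ltn_ord i)).
by apply/eqP; rewrite eqn_dvd H dvdnn -H dvdnn.
Qed.

Let T lam := #|[set z in Tset n | ordm (n %/ gcdn z n) k == lam]|.

Lemma count_sz lam : #|[set i | #|porbit g i| == lam]| =
  (lam == 1) + (ordm n k == lam) * totient n + T lam.
Proof.
rewrite /T card_sumb.
under eq_bigr => i _ do rewrite sz_g.
have nn1 : n != 1 by rewrite neq_ltn n1 orbT.
have spl : forall i : 'I_n, ((ordm (n %/ gcdn i n) k == lam) : nat) =
   ((val i == 0) && (ordm (n %/ gcdn i n) k == lam)) +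
   (coprime i n && (ordm (n %/ gcdn i n) k == lam)) +
   ((i \in Tset n) && (ordm (n %/ gcdn i n) k == lam)).
  move=> i; rewrite inE; case: (eqVneq (val i) 0) => [e|ne] /=.
    by rewrite e /coprime gcd0n (negbTE nn1) /=; case: (_ == lam).
  by case: (coprime i n); case: (_ == lam).
under eq_bigr => i _ do rewrite spl.
rewrite big_split big_split /=.
congr (_ + _ + _).
- rewrite (bigD1 (Ordinal n0)) //= big1 ?addn0.
    by rewrite gcd0n divnn n0 ordm1 eq_sym.
  by move=> i; rewrite -val_eqE /= => /negbTE ->.
- transitivity (\sum_(i : 'I_n) (coprime i n && (ordm n k == lam))).
    apply: eq_bigr => i _; case c: (coprime i n) => //=.
    by move: c; rewrite /coprime => /eqP ->; rewrite divn1.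
  case: (ordm n k == lam); last by rewrite mul0n big1 // => i _; rewrite andbF.
  rewrite mul1n totient_count_coprime big_mkord.
  by apply: eq_bigr => i _; rewrite andbT coprime_sym.
- by rewrite -card_sumb.
Qed.

Lemma ratdiv (a b c : nat) : 0 < c -> a * c = b -> (a%:R : rat)%R = (b%:R / c%:R)%R.
Proof. by move=> c0 <-; rewrite natrM mulfK // pnatr_eq0 -lt0n. Qed.

Lemma model_conds : conds n k (ncyc g).
Proof.
set l := ordm n k.
have l0 : 0 < l by [].
have l1 : 1 < l.
  have := ordm_dvd 1 n0 cop; rewrite -/l dvdn1 expn1 (modn_small n1).
  rewrite modn_small; last by case/andP: hk.
  move=> e; rewrite ltn_neqAle l0 andbT eq_sym -e.
  by case/andP: hk => h1 _; rewrite neq_ltn h1 orbT.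
have hnc : forall lam, ncyc g lam * lam = (lam == 1) + (l == lam) * totient n + T lam.
  by move=> lam; rewrite ncyc_card count_sz.
have idx := index_kunit n1 cop.
split.
- rewrite (ratdiv l0 (hnc l)) eqxx mul1n -idx.
  have -> : (l == 1) = false by apply/negbTE; rewrite neq_ltn l1 orbT.
  by rewrite add0n natrD natrM mulrDl mulfK // pnatr_eq0 -lt0n.
- move=> lam /andP[lam1 laml] _.
  rewrite (ratdiv (ltnW lam1) (hnc lam)).
  have -> : (lam == 1) = false by apply/negbTE; rewrite neq_ltn lam1 orbT.
  have -> : (l == lam) = false by apply/negbTE; rewrite neq_ltn laml orbT.
  by [].
- rewrite (ratdiv (ltn0Sn 0) (hnc 1)) eqxx.
  have -> : (l == 1) = false by apply/negbTE; rewrite neq_ltn l1 orbT.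
  by rewrite /Lc -/(T 1) /= !divr1 natrD addrC mul0n addn0.
- move=> m hm.
  case: (posnP m) => [->|m0]; first exact: ncyc0.
  have : ncyc g m * m = 0.
    rewrite ncyc_card; apply/eqP; rewrite cards_eq0; apply/eqP/setP => i.
    rewrite !inE; apply/negbTE; apply: contra hm => /eqP <-.
    rewrite -iter_perm_eq -val_eqE iter_g -modnMml.
    have := ordm_dvd l n0 cop; rewrite dvdnn => /eqP ->.
    by rewrite modnMml mul1n modn_small.
  by move/eqP; rewrite muln_eq0 (negbTE (lt0n_neq0 m0)) orbF => /eqP.
Qed.

End Model.

End M6.
Import M6.

Module M7.

Section Grp.
Variables (A : finType) (op : A -> A -> A) (e : A) (inv : A -> A) (g : A).
Hypotheses (assoc : forall x y z, op x (op y z) = op (op x y) z)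
  (idl : forall x, op e x = x /\ op x e = x)
  (invl : forall x, op (inv x) x = e /\ op x (inv x) = e)
  (gen : forall x : A, exists z : int, x = gpow op e inv g z).

Definition P m := iter m (op g) e.

Lemma PD a b : P (a + b) = op (P a) (P b).
Proof.
elim: a => [|a IH]; first by rewrite add0n /= (proj1 (idl _)).
by rewrite addSn /= -/(P (a + b)) IH assoc.
Qed.

Lemma cancel_op x y z : op x y = op x z -> y = z.
Proof.
move=> h.
by rewrite -(proj1 (idl y)) -(proj1 (invl x)) -assoc h assoc (proj1 (invl x)) (proj1 (idl z)).
Qed.

Lemma P_e_exists : exists d, (0 < d) && (P d == e).
Proof.
have : ~~ injectiveb (fun i : 'I_#|A|.+1 => P i).
  apply/negP => /injectiveP hI.
  by have := leq_card _ hI; rewrite card_ord ltnn.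
case/injectivePn => i [j] neq eq.
wlog lij : i j neq eq / i < j.
  move=> W; case: (ltngtP i j) => [l|l|l]; first exact: W l.
    by apply: (W j i); rewrite 1?eq_sym.
  by move: neq; rewrite -val_eqE /= l eqxx.
exists (j - i); rewrite subn_gt0 lij /=; apply/eqP.
apply: (@cancel_op (P i)).
by rewrite -PD subnKC ?(ltnW lij) // (proj2 (idl _)).
Qed.

Definition d := ex_minn P_e_exists.

Lemma d_gt0 : 0 < d.
Proof. by rewrite /d; case: ex_minnP => m /andP[]. Qed.

Lemma Pd : P d = e.
Proof. by rewrite /d; case: ex_minnP => m /andP[_ /eqP]. Qed.

Lemma d_min m : 0 < m -> P m = e -> d <= m.
Proof. by move=> m0 pm; rewrite /d; case: ex_minnP => x _; apply; rewrite m0 pm eqxx. Qed.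

Lemma P_mul q : P (q * d) = e.
Proof.
elim: q => [|q IH] //.
by rewrite mulSn PD Pd IH (proj1 (idl _)).
Qed.

Lemma P_mod m : P m = P (m %% d).
Proof. by rewrite {1}(divn_eq m d) addnC PD P_mul (proj2 (idl _)). Qed.

Lemma inv_g : inv g = P d.-1.
Proof.
have h1 : op g (P d.-1) = e by rewrite -[op g _]/(P d.-1.+1) prednK ?d_gt0 // Pd.
rewrite -(proj2 (idl (inv g))) -h1 assoc (proj1 (invl g)) (proj1 (idl _)).
by [].
Qed.

Lemma iterP c m : iter m (op (P c)) e = P (c * m).
Proof.
elim: m => [|m IH]; first by rewrite muln0.
by rewrite /= IH -PD mulnS.
Qed.

Lemma P_surj x : exists m, x = P m.
Proof.
case: (gen x) => [[m|m]] ->; first by exists m.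
by exists (d.-1 * m.+1); rewrite /= inv_g -iterP.
Qed.

Lemma P_inj_lt a b : a < d -> b < d -> P a = P b -> a = b.
Proof.
wlog lab : a b / a <= b.
  move=> W ha hb pab; case: (leqP a b) => l; first exact: W.
  by apply/esym/W => //; apply: ltnW.
move=> ha hb pab; apply/eqP; rewrite eqn_leq lab /=.
rewrite leqNgt; apply/negP => l.
have : P (b - a) = e.
  apply: (@cancel_op (P a)); by rewrite -PD subnKC // (proj2 (idl _)).
rewrite -subn_gt0 in l.
move/(d_min l) => h.
by have := leq_ltn_trans h (leq_ltn_trans (leq_subr a b) hb); rewrite ltnn.
Qed.

Lemma card_d : #|A| = d.
Proof.
have hI : injective (fun i : 'I_d => P i).
  by move=> i j /P_inj_lt h; apply/val_inj/h.
transitivity #|[set P i | i : 'I_d]|; last by rewrite card_imset // card_ord.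
rewrite -cardsT; congr #|pred_of_set _|.
apply/setP => x; rewrite !inE; apply/esym/imsetP.
case: (P_surj x) => m ->; exists (Ordinal (ltn_pmod m d_gt0)) => //.
exact: P_mod.
Qed.

End Grp.

Lemma analyze (A : finType) n' (hA : #|A| = n'.+1) (f : {perm A}) op :
  cyclic_group_op op -> (forall x y, f (op x y) = op (f x) (f y)) ->
  exists k, exists h : 'I_n'.+1 -> A,
    [/\ bijective h, k < n'.+1 & forall i, f (h i) = h (inZp (k * i))].
Proof.
case=> e [inv [assoc idl invl [g gen]]] hf.
have cd := card_d assoc idl invl gen.
have Pmod := P_mod g assoc idl invl.
have Pinj := P_inj_lt (g := g) (assoc := assoc) (idl := idl) (invl := invl).
have Psurj := P_surj assoc idl invl gen.
move: Pmod Pinj; rewrite -cd hA => Pmod Pinj.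
have fe : f e = e.
  apply: (cancel_op assoc idl invl (x := f e)).
  by rewrite -hf (proj1 (idl e)) (proj2 (idl (f e))).
have fP : forall m, f (P op e g m) = iter m (op (f g)) e.
  by elim=> [|m IH] //=; rewrite hf IH.
case: (Psurj (f g)) => c fg.
exists (c %% n'.+1), (fun i : 'I_n'.+1 => P op e g i); split.
- apply: inj_card_bij; last by rewrite card_ord hA.
  by move=> i j /Pinj h; apply/val_inj/h.
- by rewrite ltn_pmod.
- move=> i; rewrite fP fg iterP // Pmod [in RHS]Pmod /=.
  by rewrite modnMml.
Qed.

End M7.
Import M7.

Module M8.
Import GRing.Theory Num.Theory.

Lemma transport (A : finType) n' (f : {perm A}) (k : nat) (h : 'I_n'.+1 -> A)
  (hb : bijective h) (hc : forall i, f (h i) = h (inZp (k * i))) :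
  exists op : A -> A -> A,
    cyclic_group_op op /\ (forall x y, f (op x y) = op (f x) (f y)).
Proof.
case: hb => hi hK hKi.
exists (fun x y => h (hi x + hi y)%R); split.
- exists (h 0%R), (fun x => h (- hi x)%R); split.
  + by move=> x y z; rewrite !hK addrA.
  + by move=> x; rewrite hK add0r addr0 hKi.
  + by move=> x; rewrite hK addNr subrr.
  + exists (h (inZp 1)) => x; exists (Posz (hi x)); rewrite /gpow.
    have E : forall m, iter m (fun y => h (hi (h (inZp 1)) + hi y)%R) (h 0%R) = h (inZp m).
      elim=> [|m IH] /=; first by congr h; apply: val_inj.
      rewrite IH !hK; congr h; apply: val_inj => /=.
      by rewrite modnDm add1n.
    by rewrite E valZpK hKi.
- move=> x y; rewrite -{1}(hKi x) -{1}(hKi y) hc -{2}(hKi x) -{2}(hKi y) !hc !hK.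
  congr h; apply: val_inj => /=.
  by rewrite modnMmr mulnDr modnDm.
Qed.

Lemma conds_ext n k c1 c2 : c1 =1 c2 -> conds n k c1 -> conds n k c2.
Proof.
move=> E [h1 h2 h3 h4]; split; rewrite -?E //.
- by move=> lam hl hd; rewrite -E h2.
- by move=> m hm; rewrite -E h4.
Qed.

Lemma conds_unique n k c1 c2 : conds n k c1 -> conds n k c2 -> c1 =1 c2.
Proof.
move=> [a1 b1 c1' d1] [a2 b2 c2' d2] m.
have natI : forall a b : nat, (a%:R = b%:R :> rat)%R -> a = b.
  by move=> a b e; apply/eqP; rewrite -(eqr_nat rat) e.
set l := ordm n k in a1 b1 d1 a2 b2 d2 *.
case hm: (m %| l); last by rewrite d1 ?d2 ?hm.
case: (eqVneq m l) => [->|ml]; first by apply: natI; rewrite a1 a2.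
case: (eqVneq m 1) => [->|m1]; first by apply: natI; rewrite c1' c2'.
have m0 : 0 < m by case: m hm {ml m1} => //; rewrite dvd0n.
have hlt : 1 < m < l.
  by rewrite ltn_neqAle eq_sym m1 m0 /= ltn_neqAle ml dvdn_leq.
by apply: natI; rewrite (b1 _ hlt hm) (b2 _ hlt hm).
Qed.

Lemma mk_inj n' k : coprime k n'.+1 ->
  injective (fun i : 'I_n'.+1 => inZp (k * i) : 'I_n'.+1).
Proof.
move=> cop.
have key : forall a b : 'I_n'.+1, b <= a -> (k * a) %% n'.+1 = (k * b) %% n'.+1 -> a = b.
  move=> a b ba eab.
  have := mul_mod_gcd k (ltn0Sn n') ba.
  rewrite mulnC [b * k]mulnC /= eab eqxx.
  move: cop; rewrite /coprime => /eqP ->; rewrite divn1 !modn_small //.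
  by move/esym/eqP => e; apply: val_inj.
move=> i j /(congr1 val) /= e.
by case: (leqP j i) => l; [apply: key | apply/esym/key => //; apply: ltnW].
Qed.


End M8.
Import M8.

Import GRing.Theory Num.Theory.
Theorem theorem2p1 (A : finType) (n : nat) (hA : #|A| = n) (hn : 0 < n)
    (f : {perm A}) :
  (exists op : A -> A -> A,
      cyclic_group_op op /\ (forall x y, f (op x y) = op (f x) (f y)))
  <->
  (f = 1%g \/
   exists k : nat,
     [/\ 1 < k < n, coprime k n &
       let l := ordm n k in
       [/\ ((ncyc f l)%:R = (unit_index n k)%:R + Lc n k l :> rat)%R,
           (forall lam, 1 < lam < l -> lam %| l ->
              ((ncyc f lam)%:R = Lc n k lam :> rat)%R),
           ((ncyc f 1)%:R = Lc n k 1 + 1 :> rat)%R &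
           (forall m, ~~ (m %| l) -> ncyc f m = 0)]]).
Proof.
case: n hA hn => // n' hA _.
split.
- case=> op [cyc hf].
  have [k [h [hb kN hc]]] := analyze hA cyc hf.
  have mkI : injective (fun i : 'I_n'.+1 => inZp (k * i) : 'I_n'.+1).
    move=> i j e; apply: (bij_inj hb); apply: (@perm_inj _ f).
    by rewrite !hc e.
  pose g := perm mkI.
  have hg : forall i, g i = inZp (k * i) by move=> i; rewrite permE.
  case: (hb) => hi hK hKi.
  case: (eqVneq k 1) => [k1|k1].
    left; apply/permP => x; rewrite perm1.
    by rewrite -(hKi x) hc k1 mul1n valZpK.
  case: (eqVneq n' 0) => [n0|n0].
    left; apply/permP => x; rewrite perm1 -(hKi x) hc; congr h; apply: ord_inj.
    have z : forall a : nat, a < n'.+1 -> a = 0.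
      by rewrite n0 => a; rewrite ltnS leqn0 => /eqP.
    by rewrite (z _ (ltn_ord (inZp (k * hi x) : 'I_n'.+1))) (z _ (ltn_ord (hi x))).
  have N1 : 1 < n'.+1 by rewrite ltnS lt0n.
  have [k0 cop] : 0 < k /\ coprime k n'.+1.
    have e := permKV g (inZp 1).
    have ev := congr1 val e; rewrite hg /= (modn_small N1) in ev.
    have k0 : 0 < k by case: (k) ev => //=; rewrite mul0n mod0n.
    by split => //; apply: modn_coprime k0 _; exists (val ((g^-1)%g (inZp 1))).
  right; exists k; split => //.
    by rewrite kN andbT ltn_neqAle eq_sym k1 k0.
  have hc' : forall y, f (h y) = h (g y) by move=> y; rewrite hg hc.
  have hg' : forall i, val (g i) = (k * i) %% n'.+1 by move=> i; rewrite hg.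
  have hk : 1 < k < n'.+1 by rewrite kN andbT ltn_neqAle eq_sym k1 k0.
  apply: (conds_ext (c1 := ncyc g)); last exact: (model_conds hk cop hg').
  by move=> m; rewrite (ncyc_conj hb hc').
- case=> [f1 | [k [hk cop hcd]]].
    pose h := fun i : 'I_n'.+1 => enum_val (cast_ord (esym hA) i).
    have hb : bijective h.
      apply: inj_card_bij; last by rewrite card_ord hA.
      by move=> i j /enum_val_inj /cast_ord_inj.
    apply: (transport (k := 1) hb) => i.
    by rewrite f1 perm1 mul1n valZpK.
  pose g := perm (mk_inj cop).
  have hg' : forall i, val (g i) = (k * i) %% n'.+1 by move=> i; rewrite permE.
  have cg := model_conds hk cop hg'.
  have E : forall m, ncyc f m = ncyc g m by apply: conds_unique hcd cg.
  have a0 : A := enum_val (cast_ord (esym hA) ord0).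
  have [h [hb hc]] := conj_exists a0 E (eq_leq (esym (etrans (card_ord _) (esym hA)))).
  apply: (transport (k := k) hb) => i.
  by rewrite hc permE.
Qed.
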